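(* Let $\tau>0$, let $W:\mathbb{R}^n\to\mathbb{R}$ be a continuous positive definite function, and let $V:\mathbb{R}^n\to\mathbb{R}$ be a continuous function for which there exist class-$\mathcal{K}_\infty$ functions $\kappa_1,\kappa_2$ with $\kappa_1(|x|)\le V(x)\le\kappa_2(|x|)$ for all $x\in\mathbb{R}^n$. Then there exist a function $K_c$ of class $\mathcal{K}_\infty$ and a function $K_d$, positive, continuous and increasing on $[0,+\infty)$, such that for all $x\in\mathbb{R}^n$ and all $z\ge0$, $$\frac{K_c(V(x)+z)}{K_d(V(x)+z)}\le\frac12W(x)+\frac{1}{4\tau}z.$$
   Context: $|\cdot|$ is the Euclidean norm. A class-$\mathcal{K}_\infty$ function is a continuous function $[0,\infty)\to[0,\infty)$ that is zero at zero, strictly increasing and unbounded. *)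

(* Defs.v *)
From HB Require Import structures.
From mathcomp Require Import all_boot all_order all_algebra.
From mathcomp Require Import all_classical all_reals all_analysis.
Set Implicit Arguments. Unset Strict Implicit. Unset Printing Implicit Defensive.
Import Order.TTheory GRing.Theory Num.Theory.
Import numFieldNormedType.Exports.
Local Open Scope ring_scope.
Local Open Scope classical_set_scope.

Definition eucl_norm {R : realType} {n : nat} (x : 'rV[R]_n) : R :=
  Num.sqrt (\sum_(i < n) x ord0 i ^+ 2).

Definition class_Kinf {R : realType} (k : R -> R) : Prop :=
  {within `[0, +oo[, continuous k} /\
  k 0 = 0 /\
  (forall s t : R, 0 <= s -> s < t -> k s < k t) /\
  (forall s : R, 0 <= s -> 0 <= k s) /\
  (forall M : R, exists s : R, 0 <= s /\ M < k s).

Definition pos_def {R : realType} {n : nat} (W : 'rV[R]_n -> R) : Prop :=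
  W 0 = 0 /\ forall x, x != 0 -> 0 < W x.

(* Main.v *)
Require Import Defs.
From HB Require Import structures.
From mathcomp Require Import all_boot all_order all_algebra.
From mathcomp Require Import all_classical all_reals all_analysis.
From mathcomp Require Import lra ring.
Import Order.TTheory GRing.Theory Num.Theory.
Import numFieldNormedType.Exports.
Local Open Scope ring_scope.
Local Open Scope classical_set_scope.
Lemma lip_cont (R : realType) (g : R -> R) : (forall s t, g s <= g t + `|s - t|) -> continuous g.
Proof.
move=> h x; apply/cvgrPdist_lt => e e0.
near=> y.
have h1 := h x y; have h2 := h y x.
rewrite distrC in h2.
have : `|x - y| < e.
  near: y. exact: (@near_ball _ _ x e e0).
move=> hxy; rewrite ltr_norml; apply/andP; split; lra.
Unshelve. all: by end_near.
Qed.
Section Env.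
Variable R : realType.
Variable I : Type.
Variable Q : I -> Prop.
Variable f : I -> R -> R.
Hypothesis f0 : forall i s, Q i -> 0 <= f i s.

Definition envS (s : R) := [set r : R | r = 1 \/ exists2 i, Q i & r = f i s].
Definition env (s : R) : R := inf (envS s).

Lemma envS_lb s : has_lbound (envS s).
Proof. by exists 0 => r [->|[i Qi ->]]; [exact: ler01|exact: f0]. Qed.
Lemma envS_n0 s : envS s !=set0.
Proof. by exists 1; left. Qed.

Lemma env_le i s : Q i -> env s <= f i s.
Proof. by move=> Qi; apply: (ge_inf (envS_lb s)); right; exists i. Qed.
Lemma env_le1 s : env s <= 1.
Proof. by apply: (ge_inf (envS_lb s)); left. Qed.
Lemma env_ge x s : x <= 1 -> (forall i, Q i -> x <= f i s) -> x <= env s.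
Proof.
move=> x1 h; apply: lb_le_inf; first exact: envS_n0.
by move=> r [->|[i Qi ->]] //; apply: h.
Qed.
Lemma env_ge0 s : 0 <= env s.
Proof. by apply: env_ge; [exact: ler01| move=> i Qi; exact: f0]. Qed.

Lemma env_lip : (forall i s t, Q i -> f i s <= f i t + `|s - t|) ->
  forall s t, env s <= env t + `|s - t|.
Proof.
move=> hl s t; rewrite -lerBlDr; apply: lb_le_inf; first exact: envS_n0.
move=> r [->|[i Qi ->]].
  have := env_le1 s; have := normr_ge0 (s - t); lra.
have := env_le i s Qi; have := hl i s t Qi; lra.
Qed.

Lemma env_mono : (forall i s t, Q i -> s <= t -> f i s <= f i t) ->
  forall s t, s <= t -> env s <= env t.
Proof.
move=> hm s t st; apply: lb_le_inf; first exact: envS_n0.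
move=> r [->|[i Qi ->]]; first exact: env_le1.
apply: le_trans (env_le i s Qi) _; exact: hm.
Qed.

Lemma env_anti : (forall i s t, Q i -> s <= t -> f i t <= f i s) ->
  forall s t, s <= t -> env t <= env s.
Proof.
move=> hm s t st; apply: lb_le_inf; first exact: envS_n0.
move=> r [->|[i Qi ->]]; first exact: env_le1.
apply: le_trans (env_le i t Qi) _; exact: hm.
Qed.

Lemma env_pos s m : 0 < m -> (forall i, Q i -> m <= f i s) -> 0 < env s.
Proof.
move=> m0 h; apply: lt_le_trans (_ : Num.min m 1 <= _).
  by rewrite lt_min m0 ltr01.
apply: env_ge; first by rewrite ge_min lexx orbT.
by move=> i Qi; rewrite ge_min h.
Qed.
End Env.
Arguments env {R I}.
Arguments env_le {R I Q f}.
Arguments env_le1 {R I Q f}.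
Arguments env_ge0 {R I Q f}.
Arguments env_lip {R I Q f}.
Arguments env_mono {R I Q f}.
Arguments env_anti {R I Q f}.
Arguments env_pos {R I Q f}.
Lemma eucl_norm0 (R : realType) n : eucl_norm (0 : 'rV[R]_n) = 0.
Proof. by rewrite /eucl_norm big1 ?sqrtr0 // => i _; rewrite mxE expr0n. Qed.

Lemma eucl_norm_ge0 (R : realType) n (x : 'rV[R]_n) : 0 <= eucl_norm x.
Proof. exact: sqrtr_ge0. Qed.

Lemma coord_le (R : realType) n (x : 'rV[R]_n) i : `|x ord0 i| <= eucl_norm x.
Proof.
rewrite /eucl_norm -sqrtr_sqr ler_sqrt; last by apply: sumr_ge0 => j _; exact: sqr_ge0.
by rewrite (bigD1 i) //= lerDl; apply: sumr_ge0 => j _; exact: sqr_ge0.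
Qed.

Lemma Kinf_le (R : realType) (k : R -> R) s t : class_Kinf k -> 0 <= s -> s <= t -> k s <= k t.
Proof.
move=> [_ [_ [hk _]]] s0; rewrite le_eqVlt => /orP[/eqP->//|st].
exact/ltW/hk.
Qed.

Lemma keylem (R : realType) n (W V : 'rV[R]_n -> R) k1 k2 :
  continuous W -> pos_def W -> continuous V -> class_Kinf k1 -> class_Kinf k2 ->
  (forall x, k1 (eucl_norm x) <= V x <= k2 (eucl_norm x)) ->
  forall a b, 0 < a -> exists2 m, 0 < m & forall x, a <= V x -> V x <= b -> m <= W x.
Proof.
move=> cW [W0 Wp] cV hk1 hk2 hV a b a0.
set A := [set x | a <= V x /\ V x <= b].
case: (pselect (A !=set0)) => [A0|A0]; last first.
  by exists 1 => // x h1 h2; exfalso; apply: A0; exists x.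
have Acl : closed A.
  have -> : A = V @^-1` [set y | a <= y] `&` V @^-1` [set y | y <= b] by [].
  apply: closedI; apply: preimage_closed.
  - by move=> x _; exact: cV.
  - exact: closed_ge.
  - by move=> x _; exact: cV.
  - exact: closed_le.
have [s0 [s00 bs0]] := (proj2 (proj2 (proj2 (proj2 hk1)))) b.
have Acp : compact A.
  apply: (subclosed_compact Acl (@rV_compact _ n (fun=> `[- s0, s0]%classic) _)).
    by move=> _; exact: segment_compact.
  move=> x [_ Vb] i /=; rewrite in_itv /= -ler_norml.
  have hx := @coord_le R n x i. apply: (le_trans hx).
  rewrite leNgt; apply/negP => hs.
  have := @Kinf_le R k1 _ _ hk1 s00 (ltW hs); have := hV x; case/andP => h1 _.
  move=> h2; have : k1 s0 <= b by exact: (le_trans h2 (le_trans h1 Vb)).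
  by rewrite leNgt bs0.
have [c cA cmin] := compact_EVT_min A0 Acp (continuous_subspaceT cW).
have cA' : A c by move: cA; rewrite inE.
exists (W c).
  apply: Wp; apply/negP => /eqP c0; move: cA'; rewrite c0 => -[h _].
  have := hV 0; rewrite eucl_norm0 (proj1 (proj2 hk2)) => /andP[_ h'].
  by have := lt_le_trans a0 (le_trans h h'); rewrite ltxx.
by move=> x h1 h2; apply: cmin; rewrite inE.
Qed.
Lemma maxlip (R : realType) (a b : R) : Num.max a 0 <= Num.max b 0 + `|a - b|.
Proof.
have h1 := ler_norm (a - b); have h3 := normr_ge0 (a - b).
have h2 : b <= Num.max b 0 by rewrite le_max lexx.
have h4 : 0 <= Num.max b 0 by rewrite le_max lexx orbT.
rewrite ge_max; apply/andP; split; lra.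
Qed.

Lemma maxmono (R : realType) (a b : R) : a <= b -> Num.max a 0 <= Num.max b 0.
Proof.
move=> ab; have h2 : b <= Num.max b 0 by rewrite le_max lexx.
have h4 : 0 <= Num.max b 0 by rewrite le_max lexx orbT.
rewrite ge_max; apply/andP; split; lra.
Qed.

Lemma max0ge (R : realType) (a : R) : 0 <= Num.max a 0 /\ a <= Num.max a 0.
Proof. by rewrite !le_max !lexx orbT. Qed.

Lemma ratio_le (R : realType) (s a b : R) : 0 <= s -> 0 <= a -> 0 < b -> b <= 1 ->
  (s * a / (1 + a)) / (2 * (1 + s) / b) <= a /\
  (s * a / (1 + a)) / (2 * (1 + s) / b) <= b.
Proof.
move=> s0 a0 b0 b1.
have a1 : 0 < 1 + a by lra.
set q := a / (1 + a).
have q0 : 0 <= q by apply: divr_ge0 => //; lra.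
have q1 : q <= 1 by rewrite /q ler_pdivrMr //; lra.
have qa : q <= a by rewrite /q ler_pdivrMr //; nra.
set D := 2 * (1 + s) / b.
have D0 : 0 < D by apply: divr_gt0 => //; lra.
have D1 : 2 * (1 + s) <= D by rewrite /D ler_pdivlMr //; nra.
have -> : s * a / (1 + a) = s * q by rewrite /q mulrA.
have h1 : s * q <= s * a by rewrite ler_wpM2l.
have h1' : s * q <= s * 1 by rewrite ler_wpM2l.
have h2 : a * (2 * (1 + s)) <= a * D by rewrite ler_wpM2l.
have h3 : 0 <= s * a by exact: mulr_ge0.
have h4 : b * D = 2 * (1 + s) by rewrite /D mulrC divfK // gt_eqF.
rewrite !ler_pdivrMr //; split; last lra.
have : a * (2 * (1 + s)) = 2 * a + 2 * (s * a) by ring.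
lra.
Qed.

Lemma divlt (R : realType) (a b c d : R) : 0 < c -> 0 < d -> a * d < b * c -> a / c < b / d.
Proof. by move=> c0 d0 h; rewrite ltr_pdivrMr // mulrAC ltr_pdivlMr. Qed.

Lemma cont_of (R : realType) (g : R -> R) : (forall s t, g s <= g t + `|s - t|) -> continuous g.
Proof. exact: lip_cont. Qed.

Lemma qmono (R : realType) (s t a b : R) : 0 <= s -> s <= t -> 0 <= a -> a <= b ->
  s * a / (1 + a) <= t * b / (1 + b).
Proof.
move=> s0 st a0 ab.
rewrite ler_pdivrMr; last lra.
rewrite mulrAC ler_pdivlMr; last lra.
have h1 : 0 <= s * a by exact: mulr_ge0.
have h2 : s * a <= s * b by rewrite ler_wpM2l.
have h3 : s * b <= t * b by rewrite ler_wpM2r //; lra.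
nra.
Qed.

Lemma qstrict (R : realType) (s t a b : R) : 0 <= s -> s < t -> 0 <= a -> a <= b -> 0 < b ->
  s * a / (1 + a) < t * b / (1 + b).
Proof.
move=> s0 st a0 ab b0.
apply: divlt; try lra.
have h1 : 0 <= s * a by exact: mulr_ge0.
have h2 : s * a <= s * b by rewrite ler_wpM2l.
have h3 : s * b < t * b by rewrite ltr_pM2r.
nra.
Qed.

Theorem lemma2 (R : realType) (n : nat) (tau : R) (W V : 'rV[R]_n -> R)
  (k1 k2 : R -> R) :
  0 < tau ->
  continuous W -> pos_def W ->
  continuous V -> class_Kinf k1 -> class_Kinf k2 ->
  (forall x, k1 (eucl_norm x) <= V x <= k2 (eucl_norm x)) ->
  exists Kc Kd : R -> R,
    class_Kinf Kc /\
    (forall s, 0 <= s -> 0 < Kd s) /\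
    {within `[0, +oo[, continuous Kd} /\
    (forall s t, 0 <= s -> s < t -> Kd s < Kd t) /\
    (forall x (z : R), 0 <= z ->
       Kc (V x + z) / Kd (V x + z) <= 1/2 * W x + z / (4 * tau)).
Proof.
move=> tau0 cW pW cV hk1 hk2 hV.
have W0 : forall x, 0 <= W x.
  move=> x; case: (eqVneq x 0) => [->|/(proj2 pW) /ltW //]; by rewrite (proj1 pW).
have V0 : forall x, 0 <= V x.
  move=> x; case/andP: (hV x) => h _.
  have h0 := (proj1 (proj2 (proj2 (proj2 hk1)))) _ (@eucl_norm_ge0 R n x).
  lra.
have t4 : 0 < 4 * tau by lra.
pose I := ('rV[R]_n * R)%type.
pose Q1 := fun i : I => 0 <= i.2 /\ V i.1 <= 1.
pose f1 := fun (i : I) (s : R) => 1/2 * W i.1 + i.2 / (4 * tau) + Num.max (s - V i.1 - i.2) 0.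
pose Q2 := fun i : I => 0 <= i.2 /\ 1 <= V i.1.
pose f2 := fun (i : I) (s : R) => 1/2 * W i.1 + i.2 / (4 * tau) + Num.max (V i.1 + i.2 - s) 0.
have base : forall i : I, 0 <= i.2 -> 0 <= 1/2 * W i.1 + i.2 / (4 * tau).
  move=> i z0; apply: addr_ge0; first by apply: mulr_ge0 => //; lra.
  exact: divr_ge0 (ltW t4).
have f10 : forall i s, Q1 i -> 0 <= f1 i s.
  move=> i s [z0 _]; rewrite /f1; have := base i z0.
  have := proj1 (@max0ge R (s - V i.1 - i.2)); lra.
have f20 : forall i s, Q2 i -> 0 <= f2 i s.
  move=> i s [z0 _]; rewrite /f2; have := base i z0.
  have := proj1 (@max0ge R (V i.1 + i.2 - s)); lra.
pose e1 := env Q1 f1.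
pose e2 := env Q2 f2.
have e1lip : forall s t, e1 s <= e1 t + `|s - t|.
  apply: env_lip => // i s t _; rewrite /f1 /=.
  have e : (s - V i.1 - i.2) - (t - V i.1 - i.2) = s - t by ring.
  move: (@maxlip R (s - V i.1 - i.2) (t - V i.1 - i.2)); rewrite e; lra.
have e2lip : forall s t, e2 s <= e2 t + `|s - t|.
  apply: env_lip => // i s t _; rewrite /f2 /=.
  have e : (V i.1 + i.2 - s) - (V i.1 + i.2 - t) = - (s - t) by ring.
  move: (@maxlip R (V i.1 + i.2 - s) (V i.1 + i.2 - t)); rewrite e normrN; lra.
have ce1 := @cont_of R e1 e1lip.
have ce2 := @cont_of R e2 e2lip.
have e1mono : forall s t, s <= t -> e1 s <= e1 t.
  apply: env_mono => // i s t _ st; rewrite /f1 /=.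
  have := @maxmono R (s - V i.1 - i.2) (t - V i.1 - i.2) ltac:(lra); lra.
have e2anti : forall s t, s <= t -> e2 t <= e2 s.
  apply: env_anti => // i s t _ st; rewrite /f2 /=.
  have := @maxmono R (V i.1 + i.2 - t) (V i.1 + i.2 - s) ltac:(lra); lra.
have e10 : forall s, 0 <= e1 s by move=> s; exact: env_ge0.
have e21 : forall s, e2 s <= 1 by move=> s; exact: env_le1.
have e1pos : forall s, 0 < s -> 0 < e1 s.
  move=> s s0.
  have [mW mW0 hmW] := @keylem R n W V k1 k2 cW pW cV hk1 hk2 hV (s / 2) 1 ltac:(lra).
  have m3 : 0 < (s / 4) / (4 * tau) by apply: divr_gt0 => //; lra.
  apply: (env_pos s (Num.min (mW / 2) (Num.min (s / 4) ((s / 4) / (4 * tau))))).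
    by rewrite !lt_min m3 andbT divr_gt0 //=; lra.
  move=> [x z] [/= z0 Vx1]; rewrite /f1 /=.
  have [hm1 hm2] := @max0ge R (s - V x - z).
  have hz : 0 <= z / (4 * tau) by exact: divr_ge0 (ltW t4).
  have hw : 0 <= 1/2 * W x by apply: mulr_ge0 => //; lra.
  case: (leP (s / 2) (V x)) => hVx.
    have hw' := hmW x hVx Vx1.
    rewrite ge_min; apply/orP; left; lra.
  rewrite ge_min; apply/orP; right; rewrite ge_min; apply/orP.
  case: (leP z (s / 4)) => hz4.
    left; lra.
  right; have : (s / 4) / (4 * tau) <= z / (4 * tau).
    by rewrite ler_pM2r ?invr_gt0 //; lra.
  lra.
have e2pos : forall s, 0 < e2 s.
  move=> s.
  have [mW mW0 hmW] := @keylem R n W V k1 k2 cW pW cV hk1 hk2 hV 1 (s + 1) ltr01.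
  apply: (env_pos s (Num.min (mW / 2) 1)).
    by rewrite lt_min ltr01 andbT divr_gt0.
  move=> [x z] [/= z0 Vx1]; rewrite /f2 /=.
  have hb := base (x, z) z0; have [hm1 hm2] := @max0ge R (V x + z - s).
  case: (leP (V x) (s + 1)) => hVx.
    have := hmW x Vx1 hVx => hw.
    rewrite ge_min; apply/orP; left.
    have : mW / 2 <= 1 / 2 * W x by lra.
    have : 0 <= z / (4 * tau) by exact: divr_ge0 (ltW t4).
    lra.
  rewrite ge_min; apply/orP; right.
  have : 0 <= z / (4 * tau) by exact: divr_ge0 (ltW t4).
  have : 0 <= 1/2 * W x by apply: mulr_ge0 => //; lra.
  lra.
exists (fun s => s * e1 s / (1 + e1 s)), (fun s => 2 * (1 + s) / e2 s).
split; [split; [|split; [|split; [|split]]]|split; [|split; [|split]]].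
- apply: continuous_subspaceT => x.
  apply: (@continuousM R R (fun s => s * e1 s) (fun s => (1 + e1 s)^-1)).
    apply: (@continuousM R R id e1); [exact: cvg_id | exact: ce1].
  apply: continuousV.
    by rewrite gt_eqF //; have := e10 x; lra.
  apply: (@continuousD R R^o R (fun=> 1) e1); [exact: cvg_cst | exact: ce1].
- by rewrite /= !mul0r.
- move=> s t s0 st /=; apply: qstrict => //; first by apply: e1mono; exact: ltW.
  by apply: e1pos; lra.
- move=> s s0 /=; apply: divr_ge0; [exact: mulr_ge0|]; have := e10 s; lra.
- move=> M.
  have q1 : 0 < e1 1 / (1 + e1 1) by apply: divr_gt0; [exact: e1pos|have := e10 1; lra].
  have hq : 0 <= `|M| / (e1 1 / (1 + e1 1)) by apply: divr_ge0 => //; exact: ltW.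
  exists (1 + `|M| / (e1 1 / (1 + e1 1))).
  have hs1 : 1 <= 1 + `|M| / (e1 1 / (1 + e1 1)) by lra.
  split; first lra.
  have := @qmono R (1 + `|M| / (e1 1 / (1 + e1 1))) (1 + `|M| / (e1 1 / (1 + e1 1)))
     (e1 1) (e1 (1 + `|M| / (e1 1 / (1 + e1 1)))) ltac:(lra) (lexx _) (e10 1) (e1mono _ _ hs1).
  rewrite -mulrA mulrDl mul1r divfK ?gt_eqF // => h.
  have := ler_norm M; lra.
- move=> s s0 /=; apply: divr_gt0; [lra | exact: e2pos].
- apply: continuous_subspaceT => x.
  apply: (@continuousM R R (fun s => 2 * (1 + s)) (fun s => (e2 s)^-1)).
    apply: (@continuousM R R (fun=> 2) (fun s => 1 + s)); first exact: cvg_cst.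
    apply: (@continuousD R R^o R (fun=> 1) id); [exact: cvg_cst | exact: cvg_id].
  apply: continuousV; [by rewrite gt_eqF // e2pos | exact: ce2].
- move=> s t s0 st /=; apply: divlt; try exact: e2pos.
  have h1 := e2anti s t (ltW st); have h2 := e2pos t; have h3 := e2pos s.
  nra.
- move=> x z z0 /=.
  have y0 : 0 <= V x + z by have := V0 x; lra.
  have [hA hB] := @ratio_le R (V x + z) (e1 (V x + z)) (e2 (V x + z)) y0 (e10 _) (e2pos _) (e21 _).
  have e0 : V x + z - V x - z = 0 by ring.
  have e0' : V x + z - (V x + z) = 0 by ring.
  case: (leP (V x) 1) => hVx.
    have := env_le f10 (x, z) (V x + z) (conj z0 hVx).
    rewrite /f1 /= e0 maxxx addr0 -/e1; lra.
  have := env_le f20 (x, z) (V x + z) (conj z0 (ltW hVx)).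
  rewrite /f2 /= e0' maxxx addr0 -/e2; lra.
Qed.
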